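(* Let $A$ be a finite alphabet of size $m$, and let $w=\mu^{\omega}(a)$ where $a\in A$ and $\mu$ is an $r$-uniform morphism ($r\ge2$) prolongable on $a$; suppose $w$ is aperiodic and uniformly recurrent. Let $t$ be a substring of $w$ such that every length-2 substring of $w$ is a substring of $t$, and let $s$ be a substring of $w$ of the form $s=ftg$ with letters $f,g\in A$. Fix a nonnegative integer $n$ and suppose that $\mu^n(s)$ is a substring of $w$, say $\mu^n(s)=w_{[\gamma,\gamma+|s|\cdot r^n]}$ for some $\gamma$. If $i$ is the remainder of $\gamma$ upon division by $r^n$, then $\gcd(i,r^n)>\frac{r^n}{m^2}$.
   Context: Words are $0$-indexed, and for a word $v$, $v_{[i,j]}$ denotes the substring of $v$ consisting of the letters at indices $i,i+1,\dots,j-1$. A morphism $\mu$ satisfies $\mu(uv)=\mu(u)\mu(v)$ for finite $u$; it is $r$-uniform if $|\mu(b)|=r$ for all $b\in A$; prolongable on $a$ means $\mu(a)$ begins with $a$, and $\mu^{\omega}(a)$ is the infinite word having every $\mu^n(a)$ as a prefix. Aperiodic: no periodic suffix. Uniformly recurrent: for every $a$ there is $b$ such that every length-$a$ substring of $w$ occurs in every length-$b$ substring of $w$. The convention $\gcd(0,r^n)=r^n$ is used. *)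

(* Defs.v *)
From mathcomp Require Import all_boot.
Set Implicit Arguments. Unset Strict Implicit. Unset Printing Implicit Defensive.

(* Infinite words over A are functions nat -> A, 0-indexed. *)

(* w_[i,j] : letters at indices i, ..., j-1 *)
Definition subw {A : Type} (w : nat -> A) (i j : nat) : seq A :=
  [seq w k | k <- iota i (j - i)].

Definition morph {A : Type} (mu : A -> seq A) (u : seq A) : seq A :=
  flatten (map mu u).

Definition morphn {A : Type} (mu : A -> seq A) (n : nat) (u : seq A) : seq A :=
  iter n (morph mu) u.

Definition uniform_morph {A : Type} (r : nat) (mu : A -> seq A) : Prop :=
  forall b, size (mu b) = r.

Definition prolongable {A : Type} (mu : A -> seq A) (a : A) : Prop :=
  exists u, mu a = a :: u.

Definition is_mu_omega {A : Type} (mu : A -> seq A) (a : A) (w : nat -> A) : Prop :=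
  forall n, subw w 0 (size (morphn mu n [:: a])) = morphn mu n [:: a].

Definition factor_of {A : Type} (u : seq A) (w : nat -> A) : Prop :=
  exists i, u = subw w i (i + size u).

Definition aperiodic {A : Type} (w : nat -> A) : Prop :=
  ~ (exists p N, 0 < p /\ forall k, N <= k -> w (k + p) = w k).

Definition uniformly_recurrent {A : eqType} (w : nat -> A) : Prop :=
  forall a, exists b, forall i j,
    infix (subw w i (i + a)) (subw w j (j + b)).

(* Main.v *)
Require Import Defs.
From mathcomp Require Import all_boot zify.

Lemma morph_cat (A : Type) (mu : A -> seq A) u v :
  morph mu (u ++ v) = morph mu u ++ morph mu v.
Proof. by rewrite /morph map_cat flatten_cat. Qed.

Lemma morphn_cat (A : Type) (mu : A -> seq A) n u v :
  morphn mu n (u ++ v) = morphn mu n u ++ morphn mu n v.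
Proof.
elim: n => [//|n IH]; by rewrite /morphn !iterS -!/(morphn mu n _) IH morph_cat.
Qed.

Lemma morphn_flat (A : Type) (mu : A -> seq A) n u :
  morphn mu n u = flatten [seq morphn mu n [:: b] | b <- u].
Proof.
elim: u => [|b u IH] /=.
  by elim: n => [//|n IH]; rewrite /morphn iterS -/(morphn mu n _) IH.
by rewrite -cat1s morphn_cat IH.
Qed.

Lemma size_morphn (A : Type) (r : nat) (mu : A -> seq A) n u :
  uniform_morph r mu -> size (morphn mu n u) = r ^ n * size u.
Proof.
move=> Hu; elim: n u => [|n IH] u; first by rewrite mul1n.
rewrite /morphn iterSr -/(morphn mu n _) IH /morph size_flatten /shape -map_comp.
rewrite (eq_map (g := fun _ => r)); last by move=> x /=; rewrite Hu.
suff -> : sumn [seq r | _ <- u] = r * size u by rewrite expnSr mulnA.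
by elim: u {IH} => [|x u IH] /=; [rewrite muln0 | rewrite IH mulnS].
Qed.

Lemma nth_flat_unif (A T : Type) (x0 : T) (F : A -> seq T) N (u : seq A) y0 q e :
  (forall b, size (F b) = N) -> e < N -> q < size u ->
  nth x0 (flatten [seq F b | b <- u]) (q * N + e) = nth x0 (F (nth y0 u q)) e.
Proof.
move=> HF he; elim: u q => [//|b u IH] [|q] /= hq.
  by rewrite mul0n add0n nth_cat HF he.
rewrite nth_cat HF mulSn -addnA ltnNge leq_addr /= addKn IH //.
Qed.

Lemma nth_subw (A : Type) (x0 : A) (w : nat -> A) i j k :
  k < j - i -> nth x0 (subw w i j) k = w (i + k).
Proof. by move=> hk; rewrite /subw (nth_map 0) ?size_iota // nth_iota. Qed.

Lemma size_subw (A : Type) (w : nat -> A) i j : size (subw w i j) = j - i.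
Proof. by rewrite /subw size_map size_iota. Qed.

Lemma fixpt (A : Type) (r : nat) (mu : A -> seq A) (a : A) (w : nat -> A) n p :
  2 <= r -> uniform_morph r mu -> is_mu_omega mu a w ->
  w p = nth (w 0) (morphn mu n [:: w (p %/ r ^ n)]) (p %% r ^ n).
Proof.
move=> hr hu hw.
have sm := @size_morphn A r mu _ _ hu.
have hN : 0 < r ^ n by rewrite expn_gt0; lia.
have Hw k q : q < r ^ k -> w q = nth (w 0) (morphn mu k [:: a]) q.
  move=> hq; rewrite -(hw k) nth_subw // sm muln1 subn0 //.
have hp : p < r ^ (n + p) by apply: leq_trans (ltn_expl p hr) _; rewrite leq_pexp2l ?leq_addl //; lia.
have E : morphn mu (n + p) [:: a] = morphn mu n (morphn mu p [:: a]) by rewrite /morphn iterD.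
rewrite (Hw _ _ hp) E morphn_flat [X in nth _ _ X](divn_eq p (r ^ n)).
have hq : p %/ r ^ n < size (morphn mu p [:: a]).
  by rewrite sm muln1 ltn_divLR // -expnD addnC.
rewrite (@nth_flat_unif _ _ (w 0) _ (r ^ n) _ a) ?ltn_pmod //; last first.
  by move=> b; rewrite sm muln1.
congr (nth _ (morphn _ _ [:: _]) _).
rewrite (set_nth_default (w 0)) // -Hw //.
by move: hq; rewrite sm muln1.
Qed.

Lemma undup_inj (T U V : eqType) (s : seq T) (f : T -> U) (h : U -> V) :
  size (undup (map f s)) <= size (undup (map (h \o f) s)) ->
  forall x y, x \in s -> y \in s -> h (f x) = h (f y) -> f x = f y.
Proof.
move=> hs x y xs ys hxy.
set Z := undup (map f s).
have uZ : uniq (map h Z).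
  apply: (leq_size_uniq (undup_uniq (map (h \o f) s))); last by rewrite size_map.
  move=> z; rewrite mem_undup => /mapP [u us ->] /=.
  by apply: map_f; rewrite mem_undup map_f.
have fxZ : f x \in Z by rewrite mem_undup map_f.
have fyZ : f y \in Z by rewrite mem_undup map_f.
have := (uniqP (h (f x)) uZ) (index (f x) Z) (index (f y) Z).
rewrite !inE size_map !index_mem => /(_ fxZ fyZ).
rewrite !(nth_map (f x)) ?index_mem // !nth_index // => /(_ hxy) hi.
by rewrite -(nth_index (f x) fxZ) hi nth_index.
Qed.

Lemma core (A : finType) (w : nat -> A) (B : A -> seq A) (D L : nat) :
  0 < D -> (forall b, size (B b) = L * D) ->
  (forall k, exists b, forall e, e < L * D -> w (k * D + e) = nth (w 0) (B b) e) ->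
  aperiodic w -> L < #|A|.
Proof.
move=> hD hB hW hap; rewrite ltnNge; apply/negP => hAL.
set N := L * D.
pose c l := size (undup [seq take (l * D) (B b) | b <- enum A]).
have c0 : 1 <= c 0.
  have : take (0 * D) (B (w 0)) \in undup [seq take (0 * D) (B b) | b <- enum A].
    by rewrite mem_undup; apply: map_f; rewrite mem_enum.
  by rewrite /c; case: (undup _).
have cL : c L <= #|A|.
  by rewrite /c (leq_trans (size_undup _)) // size_map cardE.
have [l hl hcl] : exists2 l, l < L & c l.+1 <= c l.
  case: (boolP [exists l : 'I_L, c l.+1 <= c l]) => [/existsP [l Hl] | /existsPn Hn].
    by exists l.
  have : forall l, l <= L -> l + c 0 <= c l.
    elim=> [//|l IH] hl.
    have := Hn (Ordinal hl); rewrite -ltnNge => h.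
    by rewrite addSn; apply: leq_ltn_trans h; apply: IH; apply: ltnW.
  move=> /(_ L (leqnn L)); lia.
have Hu : forall b b', take (l * D) (B b) = take (l * D) (B b') ->
    take (l.+1 * D) (B b) = take (l.+1 * D) (B b').
  move=> b b'.
  have := @undup_inj _ _ _ (enum A) (fun b => take (l.+1 * D) (B b)) (take (l * D)).
  have Ec : [seq (take (l * D) \o (fun b => take (l.+1 * D) (B b))) i | i <- enum A]
            = [seq take (l * D) (B b) | b <- enum A].
    by apply: eq_map => x /=; rewrite take_takel // leq_mul2r leqnSn orbT.
  rewrite Ec => /(_ hcl b b'); rewrite !mem_enum /= !take_takel ?leq_mul2r ?leqnSn ?orbT //.
  by move=> H /(H isT isT).
pose agree p q len := forall e, e < len -> w (p + e) = w (q + e).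
have Hstep : forall k k', agree (k * D) (k' * D) (l * D) -> agree (k * D) (k' * D) (l.+1 * D).
  move=> k k' hag.
  have [b hb] := hW k; have [b' hb'] := hW k'.
  have hlN : l.+1 * D <= N by rewrite leq_mul2r hl orbT.
  have hlN' : l * D <= N by apply: leq_trans hlN; rewrite leq_mul2r leqnSn orbT.
  have Et : take (l * D) (B b) = take (l * D) (B b').
    apply: (@eq_from_nth _ (w 0)); first by rewrite !size_takel ?hB.
    move=> e; rewrite size_takel ?hB // => he.
    rewrite !nth_take // -hb ?(leq_trans he) // -hb' ?(leq_trans he) //.
    exact: hag.
  have Et' := Hu _ _ Et.
  move=> e he.
  rewrite hb ?(leq_trans he) // hb' ?(leq_trans he) //.
  by rewrite -(nth_take (w 0) he) Et' nth_take.
pose Wb k b := all (fun e => w (k * D + e) == nth (w 0) (B b) e) (iota 0 N).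
have WbP : forall k b, Wb k b -> forall e, e < N -> w (k * D + e) = nth (w 0) (B b) e.
  move=> k b /allP H e he; apply/eqP; apply: H; rewrite mem_iota; lia.
have WbE : forall k, exists b, Wb k b.
  move=> k; have [b hb] := hW k; exists b; apply/allP => e; rewrite mem_iota => he.
  apply/eqP; apply: hb; lia.
pose F (i : 'I_#|A|.+1) := odflt (w 0) [pick b | Wb i b].
have FP : forall i : 'I_#|A|.+1, Wb i (F i).
  move=> i; rewrite /F; case: pickP => [//|H].
  by have [b hb] := WbE i; rewrite H in hb.
have : ~~ injectiveb F.
  apply/negP => /injectiveP /leq_card; rewrite card_ord; lia.
move=> /injectivePn [i [j hij hF]].
have main : forall k k', k < k' -> Wb k (F i) -> Wb k' (F i) -> False.
  move=> k k' hk Wk Wk'.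
  have H0 : agree (k * D) (k' * D) (l * D).
    move=> e he; have heN : e < N by apply: (leq_trans he); rewrite leq_mul2r ltnW ?orbT.
    by rewrite (WbP _ _ Wk) // (WbP _ _ Wk').
  have Hj : forall j0, agree ((k + j0) * D) ((k' + j0) * D) (l * D).
    elim=> [|j0 IH]; first by rewrite !addn0.
    have := Hstep _ _ IH => H e he.
    have := H (D + e); rewrite mulSn.
    have -> : (k + j0) * D + (D + e) = (k + j0.+1) * D + e by rewrite addnS mulSn; lia.
    have -> : (k' + j0) * D + (D + e) = (k' + j0.+1) * D + e by rewrite addnS mulSn; lia.
    move=> -> //; lia.
  apply: hap; exists ((k' - k) * D), (k * D); split.
    by rewrite muln_gt0 subn_gt0 hk.
  move=> q hq.
  have := divn_eq (q - k * D) D; set jj := (q - k * D) %/ D; set ee := (q - k * D) %% D => Eq.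
  have hee : ee < D by rewrite ltn_mod.
  have := Hstep _ _ (Hj jj) ee; rewrite mulSn => /(_ (leq_trans hee (leq_addr _ _))).
  have -> : (k + jj) * D + ee = q by rewrite mulnDl; lia.
  have -> : (k' + jj) * D + ee = q + (k' - k) * D.
    rewrite mulnDl mulnBl. have : k * D <= k' * D by rewrite leq_mul2r ltnW ?orbT. lia.
  by [].
have Fj : Wb j (F i) by rewrite hF FP.
case: (ltngtP i j) => hc.
- exact: (main _ _ hc (FP i) Fj).
- exact: (main _ _ hc Fj (FP i)).
- by move: hij; rewrite (val_inj hc) eqxx.
Qed.

Theorem lemma8 (A : finType) (r : nat) (mu : A -> seq A) (a : A) (w : nat -> A)
  (t : seq A) (f g : A) (n gamma : nat) :
  2 <= r ->
  uniform_morph r mu ->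
  prolongable mu a ->
  is_mu_omega mu a w ->
  aperiodic w ->
  uniformly_recurrent w ->
  factor_of t w ->
  (forall j, infix (subw w j (j + 2)) t) ->
  factor_of (f :: t ++ [:: g]) w ->
  morphn mu n (f :: t ++ [:: g]) =
    subw w gamma (gamma + size (f :: t ++ [:: g]) * r ^ n) ->
  r ^ n < gcdn (gamma %% r ^ n) (r ^ n) * #|A| ^ 2.
Proof.
move=> hr hu _ hw hap _ _ H8 _ H10.
set N := r ^ n.
have hN : 0 < N by rewrite expn_gt0; lia.
pose B b := morphn mu n [:: b].
have hB : forall b, size (B b) = N by move=> b; rewrite /B (@size_morphn A r mu _ _ hu) muln1.
set s := f :: t ++ [:: g].
have F2 : forall kk e, kk < size s -> e < N ->
    w (gamma + (kk * N + e)) = nth (w 0) (B (nth (w 0) s kk)) e.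
  move=> kk e hk he.
  have := congr1 (fun x => nth (w 0) x (kk * N + e)) H10.
  rewrite /= morphn_flat (@nth_flat_unif _ _ (w 0) B N _ (w 0) _ _ hB) // => ->.
  rewrite nth_subw //; rewrite addKn.
  have : kk.+1 * N <= size s * N by rewrite leq_mul2r hk orbT.
  rewrite mulSn /N /s /=; lia.
have Hfx : forall j e, e < N -> w (j * N + e) = nth (w 0) (B (w j)) e.
  move=> j e he; rewrite (@fixpt _ r mu a w n _ hr hu hw) -/N.
  by rewrite divnMDl // divn_small // addn0 modnMDl modn_small.
have Key : forall j, exists c, c %% N = gamma %% N /\
    forall e, e < N + N -> w (c + e) = w (j * N + e).
  move=> j; have := H8 j; rewrite /subw addKn /= => /infixP [s1 [s' Et]].
  have Es : s = (f :: s1) ++ [:: w j, w j.+1 & s' ++ [:: g]].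
    by rewrite /s Et /= -catA -addn1.
  have hk : (size s1).+2 < size s by rewrite Es size_cat /=; lia.
  have n1 : nth (w 0) s (size s1).+1 = w j.
    by rewrite Es nth_cat /= ltnn subnn.
  have n2 : nth (w 0) s (size s1).+2 = w j.+1.
    by rewrite Es nth_cat /= ltnNge leqnSn /= subSn // subnn.
  exists (gamma + (size s1).+1 * N); split.
    by rewrite addnC modnMDl.
  move=> e he; case: (ltnP e N) => heN.
    by rewrite -addnA F2 // ?n1 ?Hfx //; lia.
  have -> : gamma + (size s1).+1 * N + e = gamma + ((size s1).+2 * N + (e - N)).
    rewrite [in RHS]mulSn; lia.
  have -> : j * N + e = j.+1 * N + (e - N) by rewrite mulSn; lia.
  by rewrite F2 // ?n2 ?Hfx //; lia.
have Step : forall p, exists p', p' %% N = (p + gamma) %% N /\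
    forall e, e < N -> w (p' + e) = w (p + e).
  move=> p; have [c [hc Hc]] := Key (p %/ N).
  exists (c + p %% N); split.
    by rewrite -modnDml hc modnDml -[in RHS]modnDml addnC.
  move=> e he; rewrite -addnA Hc; last by have := ltn_pmod p hN; lia.
  by rewrite addnA -divn_eq.
have Iter : forall l p, exists p', p' %% N = (p + l * gamma) %% N /\
    forall e, e < N -> w (p' + e) = w (p + e).
  elim=> [|l IH] p; first by exists p; rewrite mul0n addn0.
  have [p1 [h1 H1]] := IH p; have [p2 [h2 H2]] := Step p1.
  exists p2; split.
    rewrite h2 -modnDml h1 modnDml; congr (_ %% _); rewrite mulSn; lia.
  by move=> e he; rewrite H2 // H1.
set d := gcdn (gamma %% N) N.
have hd : 0 < d by rewrite gcdn_gt0 hN orbT.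
have [a0 _ ha0] := Bezoutl (gamma %% N) hN.
rewrite gcdnC -/d in ha0.
have Hwin : forall k, exists b, forall e, e < N %/ d * d -> w (k * d + e) = nth (w 0) (B b) e.
  move=> k; have [p' [hp' Hp']] := Iter (k * a0) (k * d).
  have hz : p' %% N = 0.
    rewrite hp'; apply/eqP; rewrite -/(dvdn N _).
    have -> : k * d + k * a0 * gamma = k * (d + a0 * (gamma %% N)) + k * a0 * (gamma %/ N) * N.
      have -> : k * a0 * gamma = k * a0 * (gamma %/ N) * N + k * a0 * (gamma %% N).
        by rewrite {1}(divn_eq gamma N) mulnDr mulnA.
      rewrite mulnDr mulnA; lia.
    by rewrite dvdn_add ?dvdn_mull.
  exists (w (p' %/ N)) => e; rewrite divnK ?dvdn_gcdr // => he.
  by rewrite -Hp' // {1}(divn_eq p' N) hz addn0 Hfx.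
have := @core _ w B d (N %/ d) hd (fun b => etrans (hB b) (esym (divnK (dvdn_gcdr _ _)))) Hwin hap.
have := divnK (dvdn_gcdr (gamma %% N) N); rewrite -/d.
rewrite -/d; move: (N %/ d) => L EL hL; clearbody d N.
have hA : #|A| <= #|A| ^ 2 by rewrite expnS expn1 leq_pmull //; lia.
rewrite -EL; apply: (leq_trans (n := #|A| * d)); first by rewrite ltn_mul2r hd.
by rewrite mulnC leq_mul2l hA orbT.
Qed.
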